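(* Let $G$ be a connected 2-walk-regular graph that is neither bipartite nor complete multipartite. Then the canonical vector coloring of $G$ is locally injective.
   Context: With $A$ the adjacency matrix and $\circ$ the entrywise product, $G$ is 1-walk-regular if for all $\ell\in\mathbb{N}$ there are constants $a_\ell,b_\ell$ with $A^\ell\circ I=a_\ell I$ and $A^\ell\circ A=b_\ell A$; it is 2-walk-regular if additionally there are constants $c_\ell$ with $A^\ell\circ A_2=c_\ell A_2$ for all $\ell$, where $A_2$ is the adjacency matrix of the graph joining vertices at distance exactly 2 in $G$. Canonical vector coloring: for $G$ on $n$ vertices whose least adjacency eigenvalue has multiplicity $d$, take an $n\times d$ matrix $Q$ whose columns form an orthonormal basis of the least eigenspace and assign to vertex $i$ the vector $\sqrt{n/d}$ times the $i$-th row of $Q$. A vector assignment is locally injective if no two distinct vertices with a common neighbor receive the same vector. *)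

(* Defs.v *)
From HB Require Import structures.
From mathcomp Require Import all_boot all_order all_algebra.
From mathcomp Require Import reals.
Set Implicit Arguments. Unset Strict Implicit. Unset Printing Implicit Defensive.
Import Order.TTheory GRing.Theory Num.Theory.
Local Open Scope ring_scope.

Section Defs.
Variable R : realType.
Variable n : nat.

Definition simple_graph (e : rel 'I_n) : Prop :=
  symmetric e /\ irreflexive e.

Definition adjmx (e : rel 'I_n) : 'M[R]_n := \matrix_(i, j) (e i j)%:R.

Definition dist2 (e : rel 'I_n) : rel 'I_n :=
  fun i j => [&& i != j, ~~ e i j & [exists k, e i k && e k j]].

Definition adjmx2 (e : rel 'I_n) : 'M[R]_n := \matrix_(i, j) (dist2 e i j)%:R.

Definition hadamard (A B : 'M[R]_n) : 'M[R]_n := \matrix_(i, j) (A i j * B i j).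

Definition two_walk_regular (e : rel 'I_n) : Prop :=
  forall l : nat, exists a b c : R,
    [/\ hadamard (adjmx e ^+ l) 1%:M = a%:M,
        hadamard (adjmx e ^+ l) (adjmx e) = b *: adjmx e &
        hadamard (adjmx e ^+ l) (adjmx2 e) = c *: adjmx2 e].

Definition connected_graph (e : rel 'I_n) : Prop := forall i j, connect e i j.

Definition bipartite (e : rel 'I_n) : Prop :=
  exists f : 'I_n -> bool, forall i j, e i j -> f i != f j.

(* complete multipartite: vertices partitioned into parts, two vertices
   adjacent iff in different parts (includes complete graphs) *)
Definition complete_multipartite (e : rel 'I_n) : Prop :=
  exists f : 'I_n -> nat, forall i j, e i j = (f i != f j).

Definition least_eigenvalue (A : 'M[R]_n) (theta : R) : Prop :=
  eigenvalue A theta /\ forall mu, eigenvalue A mu -> theta <= mu.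

Definition orthonormal_eigenbasis (A : 'M[R]_n) (theta : R) d (Q : 'M[R]_(n, d)) :
  Prop := Q^T *m Q = 1%:M /\ (Q^T == eigenspace A theta)%MS.

Definition canonical_coloring d (Q : 'M[R]_(n, d)) (i : 'I_n) : 'rV[R]_d :=
  Num.sqrt (n%:R / d%:R) *: row i Q.

Definition locally_injective (e : rel 'I_n) d (phi : 'I_n -> 'rV[R]_d) : Prop :=
  forall i j k, i != j -> e i k -> e j k -> phi i != phi j.

End Defs.

(* Main.v *)
Require Import Defs.
From HB Require Import structures.
From mathcomp Require Import all_boot all_order all_algebra.
From mathcomp Require Import reals.
From mathcomp Require Import complex spectral sesquilinear.
From mathcomp Require Import ring.
Import Order.TTheory GRing.Theory Num.Theory.
Local Open Scope ring_scope.
Set Implicit Arguments. Unset Strict Implicit. Unset Printing Implicit Defensive.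

Lemma least_eig_neg (R : realType) n (A : 'M[R]_n) th :
  A^T = A -> \tr A = 0 -> A != 0 ->
  (forall mu, eigenvalue A mu -> th <= mu) -> th < 0.
Proof.
move=> Asym trA Anz thle.
pose f := real_complex R.
pose AC := map_mx f A.
have herm : AC \is hermsymmx.
  apply: realsym_hermsym.
    apply/is_hermitianmxP; rewrite expr0 scale1r.
    apply/matrixP=> i j; rewrite !mxE.
    by have := congr1 (fun B : 'M_n => B j i) Asym; rewrite mxE /= => ->.
  apply/mxOverP=> i j; rewrite mxE; apply/complex_realP; by exists (A i j).
have /hermitian_normalmx/orthomx_spectralP eqA := herm.
have Dreal := hermitian_spectral_diag_real herm.
set M := spectralmx AC in eqA; set D := spectral_diag AC in eqA Dreal.
have Mu : M \in unitmx by exact: spectral_unit.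
have eigj : forall j, th <= complex.Re (D 0 j).
  move=> j; have [k Dk] : exists k, D 0 j = k%:C%C by apply/complex_realP/(mxOverP Dreal).
  rewrite Dk /=; apply: thle.
  rewrite eigenvalue_root_char -(fmorph_root f) map_char_poly.
  suff H : root (char_poly AC) (D 0 j) by rewrite Dk in H; exact: H.
  rewrite -eigenvalue_root_char; apply/eigenvalueP; exists (row j M).
    have: M *m AC = diag_mx D *m M by rewrite {1}eqA !mulmxA mulmxV // mul1mx.
    move/(congr1 (row j)); rewrite !row_mul => ->.
    by rewrite row_diag_mx -scalemxAl -rowE.
  apply/negP=> /eqP r0.
  have := congr1 (fun B : 'M[R[i]]_n => row j B) (mulmxV Mu).
  rewrite /= row_mul r0 mul0mx => /rowP/(_ j); rewrite !mxE eqxx /=.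
  by move/eqP; rewrite eq_sym oner_eq0.
have trD : \sum_j complex.Re (D 0 j) = 0.
  have : \tr AC = \tr (diag_mx D).
    by rewrite {1}eqA mxtrace_mulC mulmxA mulmxV // mul1mx.
  rewrite trace_map_mx trA rmorph0 mxtrace_diag => /(congr1 (@complex.Re R)).
  by rewrite (raddf_sum (@complex.Re R)) /= => <-.
rewrite ltNge; apply/negP => th0.
have D0 : forall j, complex.Re (D 0 j) = 0.
  move=> j; apply: (psumr_eq0P _ trD) => // i _.
  exact: le_trans th0 (eigj i).
have : AC = 0.
  rewrite eqA; have -> : D = 0.
    apply/rowP=> j; rewrite [RHS]mxE.
    have [k Dk] : exists k, D 0 j = k%:C%C by apply/complex_realP/(mxOverP Dreal).
    by have := D0 j; rewrite Dk /= => ->.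
  by rewrite (_ : diag_mx 0 = 0) ?mulmx0 ?mul0mx //; apply/matrixP=> a b; rewrite !mxE mul0rn.
move/matrixP=> AC0; move/negP: Anz; apply; apply/eqP/matrixP=> i j.
by have := AC0 i j; rewrite !mxE => /complexI.
Qed.

Section Comb.
Variables (n : nat) (e : rel 'I_n) (T : eqType) (r : 'I_n -> T).
Hypotheses (esym : symmetric e) (eirr : irreflexive e)
  (conn : forall i j, connect e i j)
  (F1 : forall i j, e i j -> r i != r j)
  (F2 : forall i j, dist2 e i j -> r i = r j).

Lemma closed_all (S : 'I_n -> Prop) i0 :
  S i0 -> (forall x y, S x -> e x y -> S y) -> forall v, S v.
Proof.
move=> S0 cl v; have /connectP [p pth ->] := conn i0 v.
elim: p i0 S0 pth => [|y p IH] x Sx //= /andP [exy pth].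
exact: IH (cl _ _ Sx exy) pth.
Qed.

Lemma F2' {i j k} : i != j -> ~~ e i j -> e i k -> e k j -> r i = r j.
Proof.
move=> nij neij eik ekj; apply: F2; rewrite /dist2 nij neij /=.
by apply/existsP; exists k; rewrite eik ekj.
Qed.

Lemma tri_free_bip (v0 : 'I_n) :
  (forall i j k, e i j -> e j k -> ~~ e i k) -> bipartite e.
Proof.
move=> tf.
pose P := r v0.
pose Qv := if [pick u | e v0 u] is Some u then r u else r v0.
pose Inv v := (r v = P /\ forall w, e v w -> r w = Qv) \/
              (r v = Qv /\ forall w, e v w -> r w = P).
have I0 : Inv v0.
  left; split => // w ew; rewrite /Qv; case: pickP => [u eu|/(_ w)]; last by rewrite ew.
  have [->//|nwu] := eqVneq w u.
  have ewv : e w v0 by rewrite esym.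
  exact: (F2' nwu (tf _ _ _ ewv eu) ewv eu).
have Istep : forall x y, Inv x -> e x y -> Inv y.
  move=> x y [[rx nx]|[rx nx]] exy.
  - right; split; first exact: nx.
    move=> w eyw; have [->//|nwx] := eqVneq w x.
    have ewy : e w y by rewrite esym.
    have eyx : e y x by rewrite esym.
    by rewrite -rx; exact: (F2' nwx (tf _ _ _ ewy eyx) ewy eyx).
  - left; split; first exact: nx.
    move=> w eyw; have [->//|nwx] := eqVneq w x.
    have ewy : e w y by rewrite esym.
    have eyx : e y x by rewrite esym.
    by rewrite -rx; exact: (F2' nwx (tf _ _ _ ewy eyx) ewy eyx).
have Iall := @closed_all Inv v0 I0 Istep.
exists (fun v => r v == P). move=> i j eij.
have := F1 eij; case: (Iall i) => [[ri ni]|[ri ni]]; have rj := ni j eij.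
- by rewrite ri rj eqxx [Qv == P]eq_sym => /negbTE ->.
- by rewrite ri rj eqxx => /negbTE ->.
Qed.

Lemma tri_multi :
  (forall i j, e i j -> exists k, e i k && e k j) -> complete_multipartite e.
Proof.
move=> tri.
pose Ball i v := v = i \/ e i v \/ exists k, e i k && e k v.
have cl : forall i b w, Ball i b -> e b w -> Ball i w.
  move=> i b w [->|[eib|[a /andP[eia eab]]]] ebw.
  - by right; left.
  - by right; right; exists b; rewrite eib.
  have [->|nwi] := eqVneq w i; first by left.
  have [eiw|neiw] := boolP (e i w); first by right; left.
  have [eaw|neaw] := boolP (e a w); first by right; right; exists a; rewrite eia.
  have [ebi|nbi] := eqVneq b i; first by subst b; right; left.
  have [eib|neib] := boolP (e i b); first by right; right; exists b; rewrite eib.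
  have rib : r i = r b by apply: (F2' _ neib eia eab); rewrite eq_sym.
  have [c /andP [eac ecb]] := tri _ _ eab.
  have nci : c != i by apply/eqP => ci; move: neib; rewrite -ci ecb.
  have [eic|neic] := boolP (e i c); last first.
    have ric : r i = r c by apply: (F2' (k := a)) => //; rewrite 1?eq_sym // esym.
    by have := F1 ecb; rewrite -ric rib eqxx.
  have [<-|ncw] := eqVneq c w; first by right; left.
  have [ecw|necw] := boolP (e c w); first by right; right; exists c; rewrite eic.
  have naw : a != w by apply: contraNneq neiw => <-.
  have raw : r a = r w by apply: (F2' (k := b)) => //; rewrite esym.
  have rcw : r c = r w by apply: (F2' (k := b)) => //; rewrite esym.
  by have := F1 eac; rewrite raw rcw eqxx.
pose f v := find (fun j => r j == r v) (enum 'I_n).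
have fE : forall x y, (f x == f y) = (r x == r y).
  move=> x y; apply/eqP/eqP => [fxy|rxy]; last by rewrite /f rxy.
  have hx : has (fun j => r j == r x) (enum 'I_n) by apply/hasP; exists x; rewrite ?mem_enum.
  have hy : has (fun j => r j == r y) (enum 'I_n) by apply/hasP; exists y; rewrite ?mem_enum.
  have := nth_find x hx; have := nth_find x hy; rewrite -/(f x) -/(f y) fxy.
  by move=> /eqP <- /eqP.
exists f => i j; rewrite fE.
have [eij|neij] := boolP (e i j); first by rewrite F1.
have [->|nij] := eqVneq i j; first by rewrite eqxx.
have : Ball i j by apply: (@closed_all (Ball i) i); [by left | exact: cl].
case=> [ji|[eij'|[k /andP [eik ekj]]]].
- by move: nij; rewrite ji eqxx.
- by rewrite eij' in neij.
- by rewrite (F2' nij neij eik ekj) eqxx.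
Qed.

End Comb.

Lemma horner_mx_sum (R : comNzRingType) n (A : 'M[R]_n.+1) (p : {poly R}) :
  horner_mx A p = \sum_(l < size p) p`_l *: A ^+ l.
Proof.
rewrite -{1}[p]coefK poly_def rmorph_sum; apply: eq_bigr => l _.
by rewrite -mul_polyC rmorphM /= horner_mx_C rmorphXn /= horner_mx_X [_ * _]mul_scalar_mx.
Qed.

Section Good.
Variables (R : realType) (n : nat) (e : rel 'I_n).

Definition good (M : 'M[R]_n) := exists a b c : R, forall i j,
  [/\ i = j -> M i j = a, e i j -> M i j = b & dist2 e i j -> M i j = c].

Lemma good0 : good 0.
Proof. by exists 0, 0, 0 => i j; split => _; rewrite mxE. Qed.

Lemma goodD M N : good M -> good N -> good (M + N).
Proof.
move=> [a [b [c H]]] [a' [b' [c' H']]]; exists (a + a'), (b + b'), (c + c') => i j.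
have [h1 h2 h3] := H i j; have [h1' h2' h3'] := H' i j.
by split=> h; rewrite mxE; [rewrite h1 // h1' | rewrite h2 // h2' | rewrite h3 // h3'].
Qed.

Lemma goodZ k M : good M -> good (k *: M).
Proof.
move=> [a [b [c H]]]; exists (k * a), (k * b), (k * c) => i j.
have [h1 h2 h3] := H i j.
by split=> h; rewrite mxE; [rewrite h1 | rewrite h2 | rewrite h3].
Qed.

Lemma good_sum I (r : seq I) (F : I -> 'M[R]_n) :
  (forall i, good (F i)) -> good (\sum_(i <- r) F i).
Proof.
move=> H; elim: r => [|x r IH]; first by rewrite big_nil; exact: good0.
by rewrite big_cons; apply: goodD.
Qed.

Lemma good_pow l : simple_graph e -> @two_walk_regular R n e -> good (adjmx R e ^+ l).
Proof.
move=> [esym eirr] /(_ l) [a [b [c [H1 H2 H3]]]].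
exists a, b, c => i j; split.
- move=> <-; have := congr1 (fun M : 'M[R]_n => M i i) H1.
  by rewrite /hadamard !mxE eqxx /= ?mulr1 ?mulr1n.
- move=> eij; have := congr1 (fun M : 'M[R]_n => M i j) H2.
  by rewrite /hadamard /adjmx !mxE eij /= ?mulr1 ?mulr1n.
- move=> dij; have := congr1 (fun M : 'M[R]_n => M i j) H3.
  by rewrite /hadamard /adjmx2 !mxE dij /= ?mulr1 ?mulr1n.
Qed.

End Good.

Section Proj.
Variables (R : realType).

Lemma mxsq_eq0 m p (X : 'M[R]_(m, p)) : X *m X^T = 0 -> X = 0.
Proof.
move=> H; apply/matrixP => i k; rewrite mxE.
have := congr1 (fun M : 'M[R]_m => M i i) H; rewrite !mxE => S.
have nn : forall j, xpredT j -> 0 <= X i j * X^T j i.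
  by move=> j _; rewrite mxE -expr2 sqr_ge0.
have := psumr_eq0P nn S (i := k) isT.
by rewrite mxE => /eqP; rewrite mulf_eq0 orbb => /eqP.
Qed.

Lemma sym_sq n m (B : 'M[R]_n) (N : 'M[R]_(m, n)) :
  B^T = B -> N *m B *m B = 0 -> N *m B = 0.
Proof.
move=> Bs H; apply: mxsq_eq0.
by rewrite trmx_mul Bs mulmxA H mul0mx.
Qed.

Lemma sym_pow n m k (B : 'M[R]_n.+1) (N : 'M[R]_(m, n.+1)) :
  B^T = B -> N *m B ^+ k.+1 = 0 -> N *m B = 0.
Proof.
move=> Bs; elim: k => [|k IH]; first by rewrite expr1.
move=> H; apply: IH; rewrite exprSr -mulmxE mulmxA; apply: (sym_sq Bs).
by move: H; rewrite !exprSr -!mulmxE !mulmxA.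
Qed.

Lemma trmxX n (A : 'M[R]_n.+1) l : A^T = A -> (A ^+ l)^T = A ^+ l.
Proof.
move=> As; elim: l => [|l IH]; first by rewrite !expr0 trmx1.
by rewrite [in LHS]exprSr -mulmxE trmx_mul IH As mulmxE -exprS.
Qed.


Lemma proj_poly n (A : 'M[R]_n.+1) th d (Q : 'M[R]_(n.+1, d)) :
  A^T = A -> eigenvalue A th -> Q^T *m Q = 1%:M -> (Q^T == eigenspace A th)%MS ->
  exists (k : R) (q : {poly R}), Q *m Q^T = k *: horner_mx A q.
Proof.
move=> As eig QQ /andP [sQE sEQ].
set chi := char_poly A.
have chi0 : chi != 0 := monic_neq0 (char_poly_monic A).
have [m [q nq chiE]] := multiplicity_XsubC chi th.
rewrite chi0 /= in nq.
have rootchi : root chi th by rewrite -eigenvalue_root_char.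
have CH := Cayley_Hamilton A; rewrite -/chi chiE in CH.
rewrite rmorphM rmorphXn rmorphB /= horner_mx_X horner_mx_C in CH.
set B := A - th%:M in CH.
have Bs : B^T = B by rewrite /B linearB /= As tr_scalar_mx.
have HB : horner_mx A q *m B = 0.
  case: m chiE CH => [|m] chiE CH.
    by move: rootchi; rewrite chiE expr0 mulr1 (negbTE nq).
  exact: (sym_pow Bs CH).
set c := q.[th].
have c0 : c != 0 by [].
set P := c^-1 *: horner_mx A q.
have QtA : Q^T *m A = th *: Q^T.
  move/sub_kermxP: sQE; rewrite mulmxBr mul_mx_scalar => /eqP.
  by rewrite subr_eq0 => /eqP.
have QtAl : forall l, Q^T *m A ^+ l = th ^+ l *: Q^T.
  elim=> [|l IH]; first by rewrite !expr0 mulmx1 scale1r.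
  by rewrite exprSr -mulmxE mulmxA IH -scalemxAl QtA scalerA -exprSr.
have QtP : Q^T *m P = Q^T.
  rewrite /P -scalemxAr horner_mx_sum mulmx_sumr.
  under eq_bigr => l _ do rewrite -scalemxAr QtAl scalerA.
  by rewrite -scaler_suml -horner_coef scalerA mulVf // scale1r.
have PB : P *m B = 0 by rewrite /P -scalemxAl HB scaler0.
have sPE : (P <= Q^T)%MS.
  apply: submx_trans sEQ; exact/sub_kermxP.
have [X PX] := submxP sPE.
have Ps : P^T = P.
  apply/matrixP=> i j; rewrite !mxE horner_mx_sum !summxE; congr (_ * _).
  apply: eq_bigr => l _; rewrite !mxE.
  by congr (_ * _); rewrite -[in RHS](trmxX l As) mxE.
have PQ : P = Q *m X^T by rewrite -Ps PX trmx_mul trmxK.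
have XQ : X^T = Q^T by rewrite -[RHS]QtP PQ mulmxA QQ mul1mx.
by exists c^-1, q; rewrite -XQ -PQ.
Qed.

End Proj.


Lemma main_succ (R : realType) (n : nat) (e : rel 'I_n.+1) :
  simple_graph e ->
  connected_graph e ->
  @two_walk_regular R n.+1 e ->
  ~ bipartite e ->
  ~ complete_multipartite e ->
  forall (theta : R), least_eigenvalue (adjmx R e) theta ->
  forall (d : nat) (Q : 'M[R]_(n.+1, d)),
    orthonormal_eigenbasis (adjmx R e) theta Q ->
    locally_injective e (canonical_coloring Q).
Proof.
move=> [esym eirr] conn twr nbip nmulti th [eig least] d Q [QQ QE].
set A := adjmx R e.
have As : A^T = A by apply/matrixP=> i j; rewrite !mxE esym.
have exedge : exists i j, e i j.
  case: (boolP [exists i, [exists j, e i j]]) => [/existsP [i /existsP [j eij]]|none].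
    by exists i, j.
  exfalso; apply: nbip; exists (fun _ => true) => i j eij; case/negP: none.
  by apply/existsP; exists i; apply/existsP; exists j.
have Anz : A != 0.
  have [i [j eij]] := exedge; apply/negP => /eqP /matrixP /(_ i j).
  by rewrite !mxE eij /= => /eqP; rewrite oner_eq0.
have trA : \tr A = 0.
  by rewrite /mxtrace big1 // => i _; rewrite mxE eirr.
have thneg : th < 0 := least_eig_neg As trA Anz least.
have [k [q GE]] := proj_poly As eig QQ QE.
set G := Q *m Q^T in GE.
have Ggood : good e G.
  rewrite GE; apply: goodZ; rewrite horner_mx_sum; apply: good_sum => l.
  apply: goodZ; exact: good_pow.
have [al [be [ga Gc]]] := Ggood.
have DE : forall i j, \sum_k (Q i k - Q j k)^+2 = G i i + G j j - G i j *+ 2.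
  move=> i j; rewrite /G !mxE -sumrMnl -big_split /= -sumrB.
  by apply: eq_bigr => l _; rewrite !mxE; ring.
have rowsEq : forall i j, (row i Q = row j Q) <-> (G i i + G j j - G i j *+ 2 = 0).
  move=> i j; split => [rE|H].
    rewrite -DE big1 // => l _.
    by have := congr1 (fun v : 'rV[R]_d => v 0 l) rE; rewrite !mxE => ->; rewrite subrr expr0n.
  rewrite -DE in H; apply/rowP => l; rewrite !mxE.
  have nn : forall l, xpredT l -> 0 <= (Q i l - Q j l)^+2 by move=> ? _; exact: sqr_ge0.
  have := psumr_eq0P nn H (i := l) isT.
  by move/eqP; rewrite sqrf_eq0 subr_eq0 => /eqP.
have d0 : (0 < d)%N.
  case: d Q QQ QE {rowsEq DE GE G Ggood Gc} => // Q QQ /andP [_ sEQ].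
  move: eig; rewrite /eigenvalue -mxrank_eq0.
  have := mxrankS sEQ; have := rank_leq_row Q^T.
  by rewrite leqn0 => /eqP -> ; rewrite leqn0 => ->.
have QtA : Q^T *m A = th *: Q^T.
  move: QE => /andP [sQE _].
  move/sub_kermxP: sQE; rewrite mulmxBr mul_mx_scalar => /eqP.
  by rewrite subr_eq0 => /eqP.
have F1 : forall i j, e i j -> row i Q != row j Q.
  move=> i j eij; apply/negP => /eqP rij.
  have := (rowsEq i j).1 rij.
  have [h1 _ _] := Gc i i; have [h1' _ _] := Gc j j; have [_ h2 _] := Gc i j.
  rewrite h1 // h1' // h2 // => Hab.
  have allE : forall x y, e x y -> row x Q = row y Q.
    move=> x y exy; apply/(rowsEq x y).
    have [g1 _ _] := Gc x x; have [g1' _ _] := Gc y y; have [_ g2 _] := Gc x y.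
    by rewrite g1 // g1' // g2.
  have allr : forall v, row v Q = row ord0 Q.
    apply: (@closed_all _ e conn (fun v => row v Q = row ord0 Q) ord0) => // x y <- exy.
    by rewrite (allE _ _ exy).
  pose l0 : 'I_d := Ordinal d0.
  have Qr : forall v, Q v l0 = Q ord0 l0.
    by move=> v; have := congr1 (fun w : 'rV[R]_d => w 0 l0) (allr v); rewrite !mxE.
  have x0 : Q ord0 l0 != 0.
    apply/negP => /eqP x0.
    have := congr1 (fun M : 'M[R]_d => M l0 l0) QQ; rewrite !mxE eqxx /=.
    rewrite big1 => [/eqP|v _]; first by rewrite eq_sym oner_eq0.
    by rewrite !mxE Qr x0 mul0r.
  have := congr1 (fun M : 'M[R]_(d, n.+1) => M l0 ord0) QtA; rewrite !mxE.
  under eq_bigr => v _ do rewrite mxE Qr.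
  rewrite -mulr_sumr mulrC => /(mulIf x0) Sth.
  have : 0 <= th.
    rewrite -Sth; apply: sumr_ge0 => v _; rewrite mxE; exact: ler0n.
  by rewrite leNgt thneg.
move=> i j kk nij eik ejk; apply/negP => /eqP phiE.
have rij : row i Q = row j Q.
  move: phiE; rewrite /canonical_coloring; apply: scalerI.
  rewrite gt_eqF // sqrtr_gt0 divr_gt0 // ltr0n //.
have neij : ~~ e i j by apply/negP => /F1; rewrite rij eqxx.
have dij : dist2 e i j.
  by rewrite /dist2 nij neij /=; apply/existsP; exists kk; rewrite eik esym.
have Hag : al + al - ga *+ 2 = 0.
  have := (rowsEq i j).1 rij.
  have [h1 _ _] := Gc i i; have [h1' _ _] := Gc j j; have [_ _ h3] := Gc i j.
  by rewrite h1 // h1' // h3.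
have F2 : forall x y, dist2 e x y -> row x Q = row y Q.
  move=> x y dxy; apply/(rowsEq x y).
  have [g1 _ _] := Gc x x; have [g1' _ _] := Gc y y; have [_ _ g3] := Gc x y.
  by rewrite g1 // g1' // g3.
have [a2 [b2 [c2 G2]]] := good_pow 2 (conj esym eirr) twr.
have A2E : forall x y, (A ^+ 2) x y = \sum_z (e x z)%:R * (e z y)%:R.
  by move=> x y; rewrite expr2 -mulmxE !mxE; apply: eq_bigr => z _; rewrite !mxE.
have sum_ne0 : forall x y, (exists z, e x z && e z y) <-> (A ^+ 2) x y != 0.
  move=> x y; rewrite A2E; split.
    move=> [z /andP [exz ezy]]; apply/negP => /eqP S.
    have nn : forall z, xpredT z -> 0 <= (e x z)%:R * (e z y)%:R :> R.
      by move=> ? _; rewrite mulr_ge0 ?ler0n.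
    have := psumr_eq0P nn S (i := z) isT; rewrite exz ezy mulr1 => /eqP.
    by rewrite oner_eq0.
  move=> S; case: (boolP [exists z, e x z && e z y]) => [/existsP //|/existsPn none].
  move: S; rewrite big1 ?eqxx // => z _.
  by have := none z; rewrite negb_and => /orP [] /negbTE ->; rewrite ?mul0r ?mulr0.
have Lam : forall x y u v, e x y -> e u v -> (exists z, e x z && e z y) ->
    exists z, e u z && e z v.
  move=> x y u v exy euv /sum_ne0; have [_ h _] := G2 x y; have [_ h' _] := G2 u v.
  by rewrite h // -(h' euv) => /sum_ne0.
case: (boolP [exists x, [exists y, e x y && [exists z, e x z && e z y]]]).
  move=> /existsP [x /existsP [y /andP [exy /existsP ex]]].
  apply: nmulti; apply: (tri_multi conn F1 F2) => u v euv.
  exact: Lam exy euv ex.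
move=> /existsPn none; apply: nbip; apply: (tri_free_bip esym conn F1 F2 ord0).
move=> a b c eab ebc; apply/negP => eac; move/negP: (none a); apply.
apply/existsP; exists c; rewrite eac /=; apply/existsP; exists b; by rewrite eab.
Qed.

Theorem lemma4p10 (R : realType) (n : nat) (e : rel 'I_n) :
  simple_graph e ->
  connected_graph e ->
  @two_walk_regular R n e ->
  ~ bipartite e ->
  ~ complete_multipartite e ->
  forall (theta : R), least_eigenvalue (adjmx R e) theta ->
  forall (d : nat) (Q : 'M[R]_(n, d)),
    orthonormal_eigenbasis (adjmx R e) theta Q ->
    locally_injective e (canonical_coloring Q).
Proof.
case: n e => [|n] e; last exact: main_succ.
by move=> _ _ _ _ _ th _ d Q _ [].
Qed.
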